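(* Let $\epsilon>0$, let $\Lambda_\epsilon\subset\mathbb{R}^d$ be an $\epsilon$-lattice with fixed basis $\mathbf{b}_1,\dots,\mathbf{b}_d$, and let $q$ be a positive integer. For any points $\boldsymbol\lambda_1\neq\boldsymbol\lambda_2\in\Lambda_\epsilon$ with $c_q(\boldsymbol\lambda_1)=c_q(\boldsymbol\lambda_2)$, we have $\|\boldsymbol\lambda_1-\boldsymbol\lambda_2\|\ge 2q\epsilon$.
   Context: $\|\cdot\|$ is a fixed one of the $\ell_1,\ell_2,\ell_\infty$ norms, and balls $B_r(\mathbf{x})$ are with respect to it. A lattice is the set of integer combinations of a basis $\mathbf{b}_1,\dots,\mathbf{b}_d$ of $\mathbb{R}^d$. Its packing radius $r_p$ is the supremum of $r$ such that $B_r(\boldsymbol\lambda)\cap B_r(\boldsymbol\lambda')=\emptyset$ for all distinct lattice points; its cover radius $r_c$ is the infimum of $r$ such that the balls $B_r(\boldsymbol\lambda)$ over lattice points cover $\mathbb{R}^d$. An $\epsilon$-lattice is a lattice with $\epsilon=r_p\le r_c\le 3\epsilon$. The coloring $c_q$: writing $\boldsymbol\lambda=\sum_i\alpha_i\mathbf{b}_i$ with $\alpha_i\in\mathbb{Z}$, set $c_q(\boldsymbol\lambda)=(\alpha_1\bmod q,\dots,\alpha_d\bmod q)$. *)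

(* Defs.v *)
From HB Require Import structures.
From mathcomp Require Import all_boot all_order all_algebra.
From mathcomp Require Import boolp classical_sets reals.
Set Implicit Arguments. Unset Strict Implicit. Unset Printing Implicit Defensive.
Import Order.TTheory GRing.Theory Num.Theory.
Local Open Scope ring_scope.
Local Open Scope classical_set_scope.

Inductive normKind := L1 | L2 | Linf.

Definition vnorm {R : realType} {d : nat} (p : normKind) (v : 'rV[R]_d) : R :=
  match p with
  | L1 => \sum_(i < d) `|v 0 i|
  | L2 => Num.sqrt (\sum_(i < d) (v 0 i) ^+ 2)
  | Linf => \big[Num.max/0]_(i < d) `|v 0 i|
  end.

Definition ball_p {R : realType} {d : nat} (p : normKind) (x : 'rV[R]_d) (r : R)
  : set 'rV[R]_d := [set y | vnorm p (y - x) <= r].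

Definition is_basis {R : realType} {d : nat} (b : 'I_d -> 'rV[R]_d) : Prop :=
  (\matrix_(i < d) b i) \in unitmx.

Definition lcomb {R : realType} {d : nat} (b : 'I_d -> 'rV[R]_d) (a : 'I_d -> int)
  : 'rV[R]_d := \sum_(i < d) (b i) *~ (a i).

Definition in_lattice {R : realType} {d : nat} (b : 'I_d -> 'rV[R]_d) (x : 'rV[R]_d)
  : Prop := exists a : 'I_d -> int, x = lcomb b a.

Definition packing_radius {R : realType} {d : nat} (p : normKind)
  (b : 'I_d -> 'rV[R]_d) : R :=
  sup [set r : R | forall l l', in_lattice b l -> in_lattice b l' -> l <> l' ->
         ball_p p l r `&` ball_p p l' r = set0].

Definition cover_radius {R : realType} {d : nat} (p : normKind)
  (b : 'I_d -> 'rV[R]_d) : R :=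
  inf [set r : R | forall x : 'rV[R]_d, exists l, in_lattice b l /\ ball_p p l r x].

Definition eps_lattice {R : realType} {d : nat} (p : normKind)
  (b : 'I_d -> 'rV[R]_d) (eps : R) : Prop :=
  is_basis b /\ packing_radius p b = eps /\
  packing_radius p b <= cover_radius p b <= 3 * eps.

(* Coloring c_q, on the (unique) coefficient vector of a lattice point. *)
Definition color (q : nat) {d : nat} (a : 'I_d -> int) : 'I_d -> int :=
  fun i => (a i %% q%:Z)%Z.

(* Main.v *)
Require Import Defs.
From HB Require Import structures.
From mathcomp Require Import all_boot all_order all_algebra.
From mathcomp Require Import boolp classical_sets reals.
From mathcomp Require Import ring.
Import Order.TTheory GRing.Theory Num.Theory.
Local Open Scope ring_scope.
Local Open Scope classical_set_scope.

Lemma vnormZ (R : realType) (d : nat) (p : normKind) (k : R) (v : 'rV[R]_d) :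
  vnorm p (k *: v) = `|k| * vnorm p v.
Proof.
case: p => /=.
- rewrite mulr_sumr; apply: eq_bigr => i _; by rewrite mxE normrM.
- rewrite -sqrtr_sqr -sqrtrM ?sqr_ge0 //; congr Num.sqrt.
  rewrite mulr_sumr; apply: eq_bigr => i _; by rewrite mxE exprMn.
- rewrite (big_endo (fun x => `|k| * x)) ?mulr0 //.
    by apply: eq_bigr => i _; rewrite mxE normrM.
  by move=> x y; rewrite maxr_pMr.
Qed.

Lemma vnorm_ge0 (R : realType) (d : nat) (p : normKind) (v : 'rV[R]_d) :
  0 <= vnorm p v.
Proof.
case: p => /=.
- by apply: sumr_ge0 => i _.
- exact: sqrtr_ge0.
- by apply: (big_ind (fun x => 0 <= x)) => // x y hx hy; rewrite le_max hx.
Qed.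

Theorem lemma12 (R : realType) (d : nat) (p : normKind) (b : 'I_d -> 'rV[R]_d)
  (eps : R) (q : nat) :
  0 < eps -> eps_lattice p b eps -> (0 < q)%N ->
  forall a1 a2 : 'I_d -> int,
    lcomb b a1 <> lcomb b a2 ->
    color q a1 = color q a2 ->
    2 * q%:R * eps <= vnorm p (lcomb b a1 - lcomb b a2).
Proof.
move=> eps0 [_ [Hp _]] q0 a1 a2 Hne Hcol.
pose c := fun i => ((a1 i %/ q%:Z)%Z - (a2 i %/ q%:Z)%Z).
have Hdiff : lcomb b a1 - lcomb b a2 = (q%:R : R) *: lcomb b c.
  rewrite /lcomb -sumrB scaler_sumr; apply: eq_bigr => i _.
  rewrite -!scaler_int -scalerBl scalerA; congr (_ *: _).
  have Hi : (a1 i - a2 i = c i * q%:Z)%R.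
    have := congr1 (fun f => f i) Hcol; rewrite /color => hc.
    rewrite {1}(divz_eq (a1 i) q%:Z) {1}(divz_eq (a2 i) q%:Z) hc /c.
    ring.
  by rewrite -rmorphB Hi rmorphM /= mulrC.
set mu := lcomb b c in Hdiff.
have mu0 : mu != 0.
  apply/eqP => h; apply: Hne; apply/eqP; rewrite -subr_eq0 Hdiff h scaler0 //.
have Hmu : 2 * eps <= vnorm p mu.
  rewrite -Hp /packing_radius.
  set S := [set r : R | _].
  have [S0|Sn] := eqVneq S set0.
    move: Hp; rewrite /packing_radius -/S S0 sup0 => h.
    by move: eps0; rewrite -h ltxx.
  have Sne : S !=set0.
    by apply/set0P.
  rewrite -ler_pdivlMl // ; apply: ge_sup => // r Sr.
  rewrite leNgt; apply/negP => hlt.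
  have l0 : in_lattice b 0 by exists (fun _ => 0); rewrite /lcomb big1 // => i _; rewrite mulr0z.
  have lmu : in_lattice b mu by exists c.
  have hS := Sr 0 mu l0 lmu (fun h => ltac:(by rewrite -h eqxx in mu0)).
  suff : (ball_p p 0 r `&` ball_p p mu r) (2^-1 *: mu) by rewrite hS; case.
  split.
  - rewrite /ball_p /= subr0 vnormZ ger0_norm ?invr_ge0 //.
    exact: ltW hlt.
  - rewrite /ball_p /=.
    have -> : 2^-1 *: mu - mu = (- 2^-1) *: mu.
      by rewrite -{2}(scale1r mu) -scalerBl; congr (_ *: _); by field.
    rewrite vnormZ normrN ger0_norm ?invr_ge0 //; exact: ltW hlt.
rewrite Hdiff vnormZ ger0_norm ?ler0n // -mulrA mulrCA [_ * eps]mulrC.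
by rewrite ler_wpM2l // mulrC.
Qed.
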